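(* Let $\theta=\mathrm{cf}(\theta)$, $\kappa$ a cardinal, and $\sigma$ a regular cardinal with $\sigma>\kappa^+$ and $|\alpha|^\kappa<\sigma$ for all $\alpha<\sigma$. Let $D$ be a $\sigma$-complete filter on $\theta$ with $\theta\setminus\alpha\in D$ for all $\alpha<\theta$, and for each $\alpha<\theta$ let $\langle\beta^\alpha_\varepsilon:\varepsilon<\kappa\rangle$ be a sequence of ordinals. Then for every $X\subseteq\theta$ with $X\neq\emptyset$ mod $D$ there are a sequence of ordinals $\langle\beta^*_\varepsilon:\varepsilon<\kappa\rangle$ and $w\subseteq\kappa$ such that: (a) if $\varepsilon\in\kappa\setminus w$ then $\sigma\le\mathrm{cf}(\beta^*_\varepsilon)\le\theta$; (b) the set $B$ of $\alpha\in X$ such that $\beta^\alpha_\varepsilon=\beta^*_\varepsilon$ for all $\varepsilon\in w$, and $\sup\{\beta^*_\zeta:\zeta<\kappa,\beta^*_\zeta<\beta^*_\varepsilon\}<\beta^\alpha_\varepsilon<\beta^*_\varepsilon$ for all $\varepsilon\in\kappa\setminus w$, satisfies $B\neq\emptyset$ mod $D$; (c) if $\beta'_\varepsilon<\beta^*_\varepsilon$ for $\varepsilon\in\kappa\setminus w$, then $\{\alpha\in B:\beta'_\varepsilon<\beta^\alpha_\varepsilon$ for all $\varepsilon\in\kappa\setminus w\}\neq\emptyset$ mod $D$.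
   Context: For $Y\subseteq\theta$, ''$Y\neq\emptyset$ mod $D$'' means $\theta\setminus Y\notin D$. A filter is $\sigma$-complete if it is closed under intersections of fewer than $\sigma$ members. *)

(* Defs.v *)
(* Ordinals are modelled as the elements of an arbitrary
   strictly well-ordered type (T, lt); ordinal a is identified with the set
   of its predecessors [seg a]. *)
From Stdlib Require Import Classical.
Set Implicit Arguments.

Section Ord.
Variable T : Type.
Variable lt : T -> T -> Prop.

Definition le (x y : T) : Prop := lt x y \/ x = y.

Definition strict_wellorder : Prop :=
  (forall x, ~ lt x x) /\
  (forall x y z, lt x y -> lt y z -> lt x z) /\
  (forall x y, lt x y \/ x = y \/ lt y x) /\
  well_founded lt.

Definition seg (a : T) : T -> Prop := fun x => lt x a.
Definition segT (a : T) : Type := {x : T | lt x a}.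

Definition card_le (A B : Type) : Prop := exists f : A -> B, forall x y, f x = f y -> x = y.
Definition card_lt (A B : Type) : Prop := ~ card_le B A.

Definition is_cardinal (a : T) : Prop := forall b, lt b a -> card_lt (segT b) (segT a).

Definition cofinal_map (g b : T) (f : segT g -> segT b) : Prop :=
  forall x, lt x b -> exists i, le x (proj1_sig (f i)).

Definition is_cf (b c : T) : Prop :=
  (exists f : segT c -> segT b, cofinal_map f) /\
  (forall g, lt g c -> ~ exists f : segT g -> segT b, cofinal_map f).

Definition is_sup (S : T -> Prop) (s : T) : Prop :=
  (forall x, S x -> le x s) /\ (forall u, (forall x, S x -> le x u) -> le s u).

Definition complete_filter (theta sigma : T) (D : (T -> Prop) -> Prop) : Prop :=
  (forall A, D A -> forall x, A x -> lt x theta) /\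
  D (seg theta) /\
  ~ D (fun _ => False) /\
  (forall A B, D A -> (forall x, A x -> B x) -> (forall x, B x -> lt x theta) -> D B) /\
  (forall g, lt g sigma -> forall F : segT g -> T -> Prop, (forall i, D (F i)) ->
       D (fun x => lt x theta /\ forall i, F i x)).

(* Y <> emptyset mod D, i.e. theta \ Y notin D *)
Definition pos_mod (theta : T) (D : (T -> Prop) -> Prop) (Y : T -> Prop) : Prop :=
  ~ D (fun x => lt x theta /\ ~ Y x).

End Ord.

(* Main.v *)
Require Import Defs.
From Stdlib Require Import Classical ClassicalEpsilon FunctionalExtensionality ProofIrrelevance List Lia.
Set Implicit Arguments.

Section Basic.
Variable T : Type.
Variable lt : T -> T -> Prop.
Hypothesis Hwo : strict_wellorder lt.

Lemma lt_irr x : ~ lt x x. Proof. apply Hwo. Qed.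
Lemma lt_tr x y z : lt x y -> lt y z -> lt x z. Proof. apply Hwo. Qed.
Lemma lt_tot x y : lt x y \/ x = y \/ lt y x. Proof. apply Hwo. Qed.
Lemma lt_wf : well_founded lt. Proof. apply Hwo. Qed.

Lemma lt_asym x y : lt x y -> ~ lt y x.
Proof. intros H1 H2. exact (lt_irr (lt_tr H1 H2)). Qed.

Lemma le_refl x : le lt x x. Proof. right; reflexivity. Qed.
Lemma le_tr x y z : le lt x y -> le lt y z -> le lt x z.
Proof. intros [H|H] [H'|H']; subst; unfold le; auto. left; eapply lt_tr; eauto. Qed.
Lemma lt_le_tr x y z : lt x y -> le lt y z -> lt x z.
Proof. intros H [H'|H']; subst; auto. eapply lt_tr; eauto. Qed.
Lemma le_lt_tr x y z : le lt x y -> lt y z -> lt x z.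
Proof. intros [H|H] H'; subst; auto. eapply lt_tr; eauto. Qed.
Lemma not_lt_le x y : ~ lt x y -> le lt y x.
Proof. intros H. destruct (lt_tot x y) as [h|[h|h]]; [tauto| right; auto | left; auto]. Qed.
Lemma le_not_lt x y : le lt x y -> ~ lt y x.
Proof. intros [H|H] H'; subst. exact (lt_asym H H'). exact (lt_irr H'). Qed.
Lemma lt_le x y : lt x y -> le lt x y. Proof. left; auto. Qed.
Lemma le_lt_or_eq x y : le lt x y -> lt x y \/ x = y. Proof. auto. Qed.
Lemma not_le_lt x y : ~ le lt x y -> lt y x.
Proof. intros H. destruct (lt_tot x y) as [h|[h|h]]; auto; exfalso; apply H; unfold le; auto. Qed.

Lemma wf_min (P : T -> Prop) : (exists x, P x) -> exists x, P x /\ forall y, P y -> ~ lt y x.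
Proof.
  intros [x Hx]. revert Hx. induction x as [x IH] using (well_founded_ind lt_wf).
  intros Hx. destruct (classic (exists y, P y /\ lt y x)) as [[y [Py Hy]]|Hn].
  - exact (IH y Hy Py).
  - exists x; split; auto. intros y Py Hy. apply Hn; eauto.
Qed.

Lemma wf_min_le (P : T -> Prop) : (exists x, P x) -> exists x, P x /\ forall y, P y -> le lt x y.
Proof.
  intros H. destruct (wf_min P H) as [x [Px Hx]]. exists x; split; auto.
  intros y Py. apply not_lt_le. auto.
Qed.

Definition minT (P : T -> Prop) (H : exists x, P x) : {x | P x /\ forall y, P y -> le lt x y} :=
  constructive_indefinite_description _ (wf_min_le P H).

Lemma notcof_bound g b (f : segT lt g -> segT lt b) :
  ~ cofinal_map f -> exists x, lt x b /\ forall i, lt (proj1_sig (f i)) x.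
Proof.
  intros H. unfold cofinal_map in H. apply not_all_ex_not in H. destruct H as [x Hx].
  apply imply_to_and in Hx. destruct Hx as [Hxb Hx]. exists x; split; auto.
  intros i. apply not_le_lt. intros Hle. apply Hx. eauto.
Qed.

End Basic.
Arguments lt_irr {T lt} Hwo {x}.
Arguments lt_tr {T lt} Hwo {x y z}.
Arguments lt_asym {T lt} Hwo {x y}.
Arguments lt_le_tr {T lt} Hwo {x y z}.
Arguments le_lt_tr {T lt} Hwo {x y z}.
Arguments not_lt_le {T lt} Hwo {x y}.
Arguments lt_tot {T lt} Hwo x y.
Arguments le_refl {T lt} x.
Section Main.
Variable T : Type.
Variable lt : T -> T -> Prop.
Hypothesis Hwo : strict_wellorder lt.
Variables theta kappa sigma : T.
Variable D : (T -> Prop) -> Prop.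
Variable beta : T -> T -> T.
Variable top : T.
Hypothesis Htop : forall a e, lt a theta -> lt e kappa -> lt (beta a e) top.
Hypothesis Hsreg : is_cf lt sigma sigma.
Variable l0 : T.
Hypothesis Hl0 : lt l0 sigma.
Hypothesis Hl0k : card_lt (segT lt kappa) (segT lt l0).
Hypothesis Hpow : forall a, lt a sigma -> card_lt (segT lt kappa -> segT lt a) (segT lt sigma).
Hypothesis HD : complete_filter lt theta sigma D.
Variable X : T -> Prop.
Hypothesis HX : forall x, X x -> lt x theta.

Definition null (Y : T -> Prop) := D (fun x => lt x theta /\ ~ Y x).
Definition pos (Y : T -> Prop) := pos_mod lt theta D Y.
Hypothesis HXp : pos X.

Notation sg := (segT lt).
Notation lte := (le lt).

Lemma D_up A B : D A -> (forall x, A x -> B x) -> (forall x, B x -> lt x theta) -> D B.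
Proof. intros H1 H2 H3. destruct HD as [_ [_ [_ [Hu _]]]]. eapply Hu; eauto. Qed.

Lemma null_sub Y Y' : null Y -> (forall a, lt a theta -> Y' a -> Y a) -> null Y'.
Proof.
  intros H Hs. eapply D_up; [exact H| |]; simpl.
  - intros x [Hx Hn]. split; auto.
  - intros x [Hx _]; auto.
Qed.

Lemma pos_sup Y Y' : pos Y' -> (forall a, lt a theta -> Y' a -> Y a) -> pos Y.
Proof. intros H Hs Hn. apply H. eapply null_sub; eauto. Qed.

Lemma null_empty Y : (forall a, lt a theta -> ~ Y a) -> null Y.
Proof.
  intros H. destruct HD as [_ [Hs _]]. eapply D_up; [exact Hs| |].
  - intros x Hx. split; [exact Hx | apply H; exact Hx].
  - intros x [Hx _]; auto.
Qed.

Lemma pos_ex Y : pos Y -> exists a, lt a theta /\ Y a.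
Proof.
  intros H. apply NNPP. intros Hn. apply H. apply null_empty.
  intros a Ha HY. apply Hn; eauto.
Qed.

Lemma null_big g (Hg : lt g sigma) (F : sg g -> T -> Prop) :
  (forall i, null (F i)) -> null (fun a => exists i, F i a).
Proof.
  intros H. destruct HD as [_ [_ [_ [_ Hc]]]].
  specialize (Hc g Hg (fun i x => lt x theta /\ ~ F i x) H).
  eapply D_up; [exact Hc| |].
  - intros x [Hx Hi]. split; auto. intros [i Hi']. destruct (Hi i) as [_ Hn]. auto.
  - intros x [Hx _]; auto.
Qed.

Lemma bot_ex : exists b, forall x, lte b x.
Proof.
  destruct (wf_min_le Hwo (fun _ => True) (ex_intro _ theta I)) as [b [_ Hb]].
  exists b. intros x; apply Hb; auto.
Qed.
Definition bot : T := proj1_sig (constructive_indefinite_description _ bot_ex).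
Lemma bot_le x : lte bot x.
Proof. unfold bot. destruct (constructive_indefinite_description _ _); simpl; auto. Qed.

Lemma two_below : exists g x0 x1, lt g sigma /\ lt x0 g /\ lt x1 g /\ x0 <> x1.
Proof.
  assert (HA : exists y, lt bot y /\ lt y sigma).
  { apply NNPP; intros Hn. assert (l0 = bot).
    { destruct (bot_le l0) as [h|h]; auto. exfalso; apply Hn; eauto. }
    subst. apply Hl0k. exists (fun x : sg bot => False_rect _ (le_not_lt Hwo (bot_le (proj1_sig x)) (proj2_sig x))).
    intros x. destruct x as [x hx]. exfalso. exact (le_not_lt Hwo (bot_le x) hx). }
  destruct HA as [x1 [H1 H2]].
  assert (HB : exists g, lt x1 g /\ lt g sigma).
  { apply NNPP; intros Hn. destruct Hsreg as [_ Hm]. apply (Hm x1 H2).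
    exists (fun _ : sg x1 => exist _ x1 H2 : sg sigma). intros x Hx.
    exists (exist _ bot H1). simpl. apply (not_lt_le Hwo); auto. intros Hlt. apply Hn; eauto. }
  destruct HB as [g [H3 H4]]. exists g, bot, x1. repeat split; auto.
  - exact (lt_tr Hwo H1 H3).
  - intros E. rewrite E in H1. exact (lt_irr Hwo H1).
Qed.

Lemma null_union Y1 Y2 : null Y1 -> null Y2 -> null (fun a => Y1 a \/ Y2 a).
Proof.
  intros N1 N2. destruct two_below as [g [x0 [x1 [Hg [H0 [H1 Hne]]]]]].
  set (F := fun (i : sg g) a => (proj1_sig i = x0 /\ Y1 a) \/ (proj1_sig i <> x0 /\ Y2 a)).
  assert (HF : forall i, null (F i)).
  { intros i. destruct (classic (proj1_sig i = x0)) as [E|E].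
    - eapply null_sub; [exact N1|]. intros a _ [[_ h]|[h _]]; tauto.
    - eapply null_sub; [exact N2|]. intros a _ [[h _]|[_ h]]; tauto. }
  eapply null_sub; [exact (null_big Hg F HF)|].
  intros a _ [h|h].
  - exists (exist _ x0 H0). left; simpl; auto.
  - exists (exist _ x1 H1). right; simpl; auto.
Qed.

Lemma pos_minus A N1 N2 Tg : pos A -> null N1 -> null N2 ->
  (forall a, lt a theta -> A a -> Tg a \/ N1 a \/ N2 a) -> pos Tg.
Proof.
  intros HA H1 H2 Hs HT. apply HA.
  assert (H := null_union HT (null_union H1 H2)).
  eapply null_sub; [exact H|]. auto.
Qed.

Lemma kappa_lt_l0 : lt kappa l0.
Proof.
  apply (not_le_lt Hwo). intros H. apply Hl0k.
  exists (fun x : sg l0 => exist _ (proj1_sig x) (lt_le_tr Hwo (proj2_sig x) H) : sg kappa).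
  intros [x hx] [y hy] E. simpl in E. inversion E. subst. f_equal. apply proof_irrelevance.
Qed.
Lemma kappa_lt_sigma : lt kappa sigma.
Proof. exact (lt_tr Hwo kappa_lt_l0 Hl0). Qed.

Definition hascof (b g : T) := exists f : sg g -> sg b, cofinal_map f.
Lemma hascof_self b : hascof b b.
Proof. exists (fun x => x). intros x Hx. exists (exist _ x Hx). right; auto. Qed.
Definition CF (b : T) : T := proj1_sig (minT Hwo (hascof b) (ex_intro _ b (hascof_self b))).
Lemma CF_spec b : hascof b (CF b) /\ forall g, hascof b g -> lte (CF b) g.
Proof. unfold CF. destruct (minT _ _ _); simpl; auto. Qed.
Lemma CF_is_cf b : is_cf lt b (CF b).
Proof.
  destruct (CF_spec b) as [H1 H2]. split; auto.
  intros g Hg Hc. exact (le_not_lt Hwo (H2 g Hc) Hg).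
Qed.

Definition Lset (P : T -> Prop) (Y : T -> Prop) (c : T -> T) (w : T -> Prop) (a : T) : Prop :=
  Y a /\ (forall e, P e -> w e -> beta a e = c e) /\ (forall e, P e -> ~ w e -> lt (beta a e) (c e)).
Definition Vok (P : T -> Prop) (c : T -> T) (w : T -> Prop) (v : T -> T) :=
  forall e, P e -> ~ w e -> lt (v e) (c e).
Definition above (P : T -> Prop) (w : T -> Prop) (v : T -> T) (a : T) :=
  forall e, P e -> ~ w e -> lt (v e) (beta a e).
Definition joint P Y c w := forall v, Vok P c w v -> pos (fun a => Lset P Y c w a /\ above P w v a).
Definition cfbig (P : T -> Prop) (c : T -> T) (w : T -> Prop) :=
  forall e, P e -> ~ w e -> forall g, lt g sigma -> forall f : sg g -> sg (c e), ~ cofinal_map f.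
Definition good P Y c w := pos (Lset P Y c w) /\ joint P Y c w /\ cfbig P c w.

Definition vmax (v1 v2 : T -> T) : T -> T :=
  fun e => if excluded_middle_informative (lt (v1 e) (v2 e)) then v2 e else v1 e.
Lemma vmax_l v1 v2 e : lte (v1 e) (vmax v1 v2 e).
Proof. unfold vmax. destruct (excluded_middle_informative _); [left|right]; auto. Qed.
Lemma vmax_r v1 v2 e : lte (v2 e) (vmax v1 v2 e).
Proof. unfold vmax. destruct (excluded_middle_informative _); [right; auto|]. apply (not_lt_le Hwo); auto. Qed.
Lemma vmax_lt v1 v2 e x : lt (v1 e) x -> lt (v2 e) x -> lt (vmax v1 v2 e) x.
Proof. unfold vmax. destruct (excluded_middle_informative _); auto. Qed.

Definition upd (c : T -> T) (e : T) (u : T) : T -> T :=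
  fun x => if excluded_middle_informative (x = e) then u else c x.

Section Final.
Lemma final_assembly Y c w (HYX : forall a, Y a -> X a) :
  good (fun e => lt e kappa) Y c w ->
  exists (bstar : T -> T) (w : T -> Prop),
    (forall e, w e -> lt e kappa) /\
    (forall e, lt e kappa -> ~ w e ->
       exists c, is_cf lt (bstar e) c /\ le lt sigma c /\ le lt c theta) /\
    let B := fun a => X a /\
       (forall e, lt e kappa -> w e -> beta a e = bstar e) /\
       (forall e, lt e kappa -> ~ w e ->
          (exists s, is_sup lt (fun y => exists z, lt z kappa /\ y = bstar z /\
                                         lt (bstar z) (bstar e)) s
                     /\ lt s (beta a e)) /\
          lt (beta a e) (bstar e)) in
    pos_mod lt theta D B /\
    (forall bprime : T -> T,
       (forall e, lt e kappa -> ~ w e -> lt (bprime e) (bstar e)) ->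
       pos_mod lt theta D (fun a => B a /\
          forall e, lt e kappa -> ~ w e -> lt (bprime e) (beta a e))).
Proof.
  intros [Hpos [Hj Hcf]].
  assert (Hc0 : forall e, lt e kappa -> ~ w e -> lt bot (c e)).
  { intros e He Hw. destruct (pos_ex Hpos) as [a [_ [_ [_ H3]]]].
    exact (le_lt_tr Hwo (bot_le _) (H3 e He Hw)). }
  set (S := fun e y => exists z, lt z kappa /\ y = c z /\ lt (c z) (c e)).
  assert (Hsup : forall e, exists s, is_sup lt (S e) s /\ lte s (c e)).
  { intros e. assert (Hub : exists u, forall y, S e y -> lte y u).
    { exists (c e); intros y [z [_ [-> H]]]; left; auto. }
    destruct (wf_min_le Hwo _ Hub) as [s [Hs1 Hs2]]. exists s. split.
    - split; auto.
    - apply Hs2. intros y [z [_ [-> H]]]; left; auto. }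
  set (sp := fun e => proj1_sig (constructive_indefinite_description _ (Hsup e))).
  assert (Hsps : forall e, is_sup lt (S e) (sp e) /\ lte (sp e) (c e)).
  { intros e. unfold sp. destruct (constructive_indefinite_description _ _); simpl; auto. }
  assert (Hsplt : forall e, lt e kappa -> ~ w e -> lt (sp e) (c e)).
  { intros e He Hw. destruct (Hsps e) as [[Hs1 Hs2] [Hlt|Heq]]; auto. exfalso.
    apply (Hcf e He Hw kappa kappa_lt_sigma
      (fun z => match excluded_middle_informative (lt (c (proj1_sig z)) (c e)) with
                | left H => exist _ (c (proj1_sig z)) H
                | right _ => exist _ bot (Hc0 e He Hw) end)).
    intros x Hx.
    assert (Hnub : ~ (forall y, S e y -> lte y x)).
    { intros Hub. rewrite <- Heq in Hx. exact (le_not_lt Hwo (Hs2 x Hub) Hx). }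
    apply not_all_ex_not in Hnub. destruct Hnub as [y Hy]. apply imply_to_and in Hy.
    destruct Hy as [[z [Hz [-> Hzl]]] Hn].
    exists (exist _ z Hz). simpl. destruct (excluded_middle_informative _) as [h|h]; [|contradiction].
    simpl. left. exact (not_le_lt Hwo Hn). }
  exists c, (fun e => lt e kappa /\ w e).
  split; [intros e [H _]; exact H|].
  split.
  - intros e He Hw. assert (Hw' : ~ w e) by (intros h; apply Hw; split; auto).
    exists (CF (c e)). split; [apply CF_is_cf|]. split.
    + apply (not_lt_le Hwo). intros Hlt. destruct (CF_spec (c e)) as [[f Hf] _].
      exact (Hcf e He Hw' _ Hlt f Hf).
    + apply (not_lt_le Hwo). intros Hlt. destruct (CF_is_cf (c e)) as [_ Hmin].
      apply (Hmin theta Hlt).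
      exists (fun a : sg theta =>
        match excluded_middle_informative (Lset (fun e => lt e kappa) Y c w (proj1_sig a)) with
        | left H => exist _ (beta (proj1_sig a) e) (proj2 (proj2 H) e He Hw')
        | right _ => exist _ bot (Hc0 e He Hw') end).
      intros x Hx.
      set (v := fun e' => if excluded_middle_informative (e' = e) then x else bot).
      assert (Hv : Vok (fun e => lt e kappa) c w v).
      { intros e' He' Hw''. unfold v. destruct (excluded_middle_informative _); [subst; auto| apply Hc0; auto]. }
      destruct (pos_ex (Hj v Hv)) as [a [Ha [HL Hab]]]. exists (exist _ a Ha). simpl.
      destruct (excluded_middle_informative _) as [h|h]; [|contradiction]. simpl. left.
      specialize (Hab e He Hw'). unfold v in Hab.
      destruct (excluded_middle_informative (e = e)); [auto| congruence].
  - cbv zeta. split.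
    + eapply pos_sup; [apply (Hj sp); intros e He Hw; apply Hsplt; auto|].
      intros a Ha [[HYa [Heq Hlt]] Hab]. split; [auto|]. split.
      * intros e He [_ Hw]. auto.
      * intros e He Hw. assert (Hw' : ~ w e) by (intro; apply Hw; auto).
        split; [|auto]. exists (sp e). split; [apply Hsps | apply Hab; auto].
    + intros bp Hbp. set (v := vmax sp bp).
      assert (Hv : Vok (fun e => lt e kappa) c w v).
      { intros e He Hw. apply vmax_lt; [apply Hsplt; auto| apply Hbp; auto; intros [_ h]; auto]. }
      eapply pos_sup; [apply (Hj v Hv)|].
      intros a Ha [[HYa [Heq Hlt]] Hab]. split; [split; [auto|split]|].
      * intros e He [_ Hw]. auto.
      * intros e He Hw. assert (Hw' : ~ w e) by (intro; apply Hw; auto).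
        split; [|auto]. exists (sp e). split; [apply Hsps|].
        exact (le_lt_tr Hwo (vmax_l sp bp e) (Hab e He Hw')).
      * intros e He Hw. assert (Hw' : ~ w e) by (intro; apply Hw; auto).
        exact (le_lt_tr Hwo (vmax_r sp bp e) (Hab e He Hw')).
Qed.
End Final.
Section Finite.

Lemma good_ext P P' Y c w : (forall e, P e <-> P' e) -> good P Y c w -> good P' Y c w.
Proof.
  intros Hi [Hp [Hj Hc]].
  assert (HL : forall a, Lset P Y c w a <-> Lset P' Y c w a).
  { intros a; unfold Lset; split; intros [h1 [h2 h3]]; repeat split; auto;
      intros e He; first [apply h2 | apply h3]; apply Hi; auto. }
  split; [|split].
  - eapply pos_sup; [exact Hp|]. intros a _ h; apply HL; auto.
  - intros v Hv. eapply pos_sup; [apply (Hj v); intros e He Hw; apply Hv; auto; apply Hi; auto|].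
    intros a _ [h1 h2]. split; [apply HL; auto|]. intros e He Hw; apply h2; auto; apply Hi; auto.
  - intros e He Hw. apply Hc; auto; apply Hi; auto.
Qed.

Lemma good_base c w : good (fun _ => False) X c w.
Proof.
  split; [|split].
  - eapply pos_sup; [exact HXp|]. intros a _ h. repeat split; auto; intros e [].
  - intros v _. eapply pos_sup; [exact HXp|]. intros a _ h. repeat split; auto; intros e [].
  - intros e [].
Qed.

Lemma above_mono P w v v' a : above P w v' a -> (forall x, P x -> ~ w x -> lte (v x) (v' x)) -> above P w v a.
Proof. intros H Hle x Hx Hw. exact (le_lt_tr Hwo (Hle x Hx Hw) (H x Hx Hw)). Qed.

Lemma good_vbot P Y c w : pos (Lset P Y c w) -> Vok P c w (fun _ => bot).
Proof.
  intros Hp e He Hw. destruct (pos_ex Hp) as [a [_ [_ [_ h]]]].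
  exact (le_lt_tr Hwo (bot_le _) (h e He Hw)).
Qed.

Lemma upd_eq c e u : upd c e u e = u.
Proof. unfold upd. destruct (excluded_middle_informative (e = e)); congruence. Qed.
Lemma upd_neq c e u x : x <> e -> upd c e u x = c x.
Proof. intros H. unfold upd. destruct (excluded_middle_informative (x = e)); congruence. Qed.
Arguments upd_neq : clear implicits.
Arguments upd_eq : clear implicits.

Lemma add_coord_aux P e (He : lt e kappa) (HnP : ~ P e) c w :
  forall g0 Y, (forall a, Y a -> X a) -> good P Y c w ->
  (exists v, Vok P c w v /\ null (fun a => Lset P Y c w a /\ above P w v a /\ lt g0 (beta a e))) ->
  exists Y' c' w', (forall a, Y' a -> X a) /\ good (fun x => x = e \/ P x) Y' c' w'.
Proof.
  intros g0. induction g0 as [g0 IH] using (well_founded_ind (lt_wf Hwo)).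
  intros Y HYX [Hpos [Hj Hcf]] Hex.
  set (L := Lset P Y c w).
  destruct (wf_min Hwo (fun g => exists v, Vok P c w v /\ null (fun a => L a /\ above P w v a /\ lt g (beta a e))) (ex_intro _ g0 Hex))
    as [u [[v0 [Hv0 N0]] Hmin]].
  assert (HM : forall v, Vok P c w v -> forall g, lt g u -> pos (fun a => L a /\ above P w v a /\ lt g (beta a e))).
  { intros v Hv g Hg Hn. apply (Hmin g); eauto. }
  assert (Hug0 : lte u g0) by (apply (not_lt_le Hwo); intros h; exact (Hmin g0 Hex h)).
  assert (N0' : forall v, (forall x, P x -> ~ w x -> lte (v0 x) (v x)) ->
             null (fun a => L a /\ above P w v a /\ lt u (beta a e))).
  { intros v Hle. eapply null_sub; [exact N0|]. intros a _ [h1 [h2 h3]]. split; [exact h1| split; [eapply above_mono; eauto| exact h3]]. }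
  assert (Hvb := good_vbot Hpos).
  destruct (classic (forall v, Vok P c w v -> pos (fun a => L a /\ above P w v a /\ beta a e = u))) as [Hi|Hi].
  -
    exists Y, (upd c e u), (fun x => x = e \/ w x). split; auto.
    assert (HL : forall a, Lset (fun x => x = e \/ P x) Y (upd c e u) (fun x => x = e \/ w x) a <-> L a /\ beta a e = u).
    { intros a; unfold L, Lset; split.
      - intros [h1 [h2 h3]]. split; [split; [auto|split]|].
        + intros x Hx Hw. rewrite <- (upd_neq c e u x); [apply h2; auto| intros ->; auto].
        + intros x Hx Hw. rewrite <- (upd_neq c e u x) by (intros ->; auto). apply h3; auto. intros [->|h]; auto.
        + rewrite <- (upd_eq c e u). apply h2; auto.
      - intros [[h1 [h2 h3]] h4]. split; [auto|split].
        + intros x [->|Hx] Hw; [rewrite upd_eq; auto|]. rewrite upd_neq by (intros ->; auto).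
          destruct Hw as [->|Hw]; [contradiction|auto].
        + intros x [->|Hx] Hw; [exfalso; auto|]. rewrite upd_neq by (intros ->; auto). apply h3; auto. }
    assert (HV : forall v, Vok (fun x => x = e \/ P x) (upd c e u) (fun x => x = e \/ w x) v -> Vok P c w v).
    { intros v Hv x Hx Hw. rewrite <- (upd_neq c e u x) by (intros ->; auto). apply Hv; auto. intros [->|h]; auto. }
    split; [|split].
    + eapply pos_sup; [exact (Hi _ Hvb)|]. intros a _ [h1 [_ h2]]. apply HL; auto.
    + intros v Hv. eapply pos_sup; [exact (Hi v (HV v Hv))|]. intros a _ [h1 [h2 h3]]. split; [apply HL; auto|].
      intros x [->|Hx] Hw; [exfalso; auto|]. apply h2; auto.
    + intros x [->|Hx] Hw; [exfalso; auto|]. rewrite upd_neq by (intros ->; auto). apply Hcf; auto.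
  - apply not_all_ex_not in Hi. destruct Hi as [v1 Hv1]. apply imply_to_and in Hv1. destruct Hv1 as [Hv1 N1].
    unfold pos, pos_mod in N1. apply NNPP in N1. fold (null (fun a => L a /\ above P w v1 a /\ beta a e = u)) in N1.
    assert (N1' : forall v, (forall x, P x -> ~ w x -> lte (v1 x) (v x)) ->
             null (fun a => L a /\ above P w v a /\ beta a e = u)).
    { intros v Hle. eapply null_sub; [exact N1|]. intros a _ [h1 [h2 h3]]. split; [exact h1| split; [eapply above_mono; eauto| exact h3]]. }
    set (v01 := vmax v0 v1).
    assert (Hv01 : Vok P c w v01) by (intros x Hx Hw; apply vmax_lt; auto).
    assert (Hbu : lt bot u).
    { destruct (bot_le u) as [h|h]; auto. exfalso. apply (Hj v01 Hv01).
      eapply null_sub; [exact (null_union (N0' v01 (fun x _ _ => vmax_l v0 v1 x)) (N1' v01 (fun x _ _ => vmax_r v0 v1 x)))|].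
      intros a _ [h1 h2]. destruct (bot_le (beta a e)) as [h3|h3].
      - left. rewrite h in h3. split; [exact h1|split; [exact h2|exact h3]].
      - right. split; [exact h1|split; [exact h2|congruence]]. }
    destruct (classic (exists g, lt g sigma /\ exists f : sg g -> sg u, cofinal_map f)) as [Hc|Hc].
    + (* descend *)
      destruct Hc as [g [Hg [f Hf]]].
      assert (Hcl : exists i, forall v, Vok P c w v -> pos (fun a => L a /\ above P w v a /\ lte (beta a e) (proj1_sig (f i)))).
      { apply NNPP. intros Hn.
        assert (Hall : forall i, exists v, Vok P c w v /\ null (fun a => L a /\ above P w v a /\ lte (beta a e) (proj1_sig (f i)))).
        { intros i. apply NNPP. intros Hn2. apply Hn. exists i. intros v Hv Hnull. apply Hn2. eauto. }
        set (vi := fun i => proj1_sig (constructive_indefinite_description _ (Hall i))).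
        assert (Hvi : forall i, Vok P c w (vi i) /\ null (fun a => L a /\ above P w (vi i) a /\ lte (beta a e) (proj1_sig (f i)))).
        { intros i. unfold vi. destruct (constructive_indefinite_description _ _). simpl. auto. }
        assert (Hbd : forall x, P x -> ~ w x -> exists y, lt y (c x) /\ forall i, lt (vi i x) y).
        { intros x Hx Hw.
          destruct (notcof_bound Hwo (Hcf x Hx Hw g Hg (fun i => exist _ (vi i x) (proj1 (Hvi i) x Hx Hw)))) as [y [Hy1 Hy2]].
          exists y. split; auto. }
        set (vv := fun x => match excluded_middle_informative (P x /\ ~ w x) with
                            | left H => proj1_sig (constructive_indefinite_description _ (Hbd x (proj1 H) (proj2 H)))
                            | right _ => bot end).
        assert (Hvv : forall x, P x -> ~ w x -> lt (vv x) (c x) /\ forall i, lt (vi i x) (vv x)).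
        { intros x Hx Hw. unfold vv. destruct (excluded_middle_informative _) as [h|h]; [|tauto].
          destruct (constructive_indefinite_description _ _). simpl. auto. }
        set (v' := vmax (vmax vv v0) v1).
        assert (Hv' : Vok P c w v').
        { intros x Hx Hw. apply vmax_lt; [apply vmax_lt|]; auto. apply Hvv; auto. }
        apply (HM v' Hv' bot Hbu).
        eapply null_sub; [exact (null_union (null_union (N0' v' (fun x _ _ => le_tr Hwo (vmax_r vv v0 x) (vmax_l _ v1 x))) (N1' v' (fun x _ _ => vmax_r _ v1 x))) (null_big Hg _ (fun i => proj2 (Hvi i))))|].
        intros a _ [h1 [h2 h3]].
        destruct (lt_tot Hwo (beta a e) u) as [h4|[h4|h4]].
        - right. destruct (Hf (beta a e) h4) as [i Hi]. exists i. split; [exact h1|split; [|exact Hi]].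
          eapply above_mono; [exact h2|]. intros x Hx Hw. left.
          apply (lt_le_tr Hwo (proj2 (Hvv x Hx Hw) i)).
          unfold v'. eapply le_tr; [exact Hwo| apply vmax_l | apply vmax_l].
        - left; right. auto.
        - left; left. auto. }
      destruct Hcl as [i Hi].
      set (Y3 := fun a => Y a /\ lte (beta a e) (proj1_sig (f i))).
      assert (HL3 : forall a, Lset P Y3 c w a <-> L a /\ lte (beta a e) (proj1_sig (f i))).
      { intros a. unfold Y3, L, Lset. tauto. }
      apply (IH (proj1_sig (f i))) with (Y := Y3).
      * exact (lt_le_tr Hwo (proj2_sig (f i)) Hug0).
      * intros a [h _]; auto.
      * split; [|split]; auto.
        -- eapply pos_sup; [exact (Hi _ Hvb)|]. intros a _ [h1 [_ h2]]. apply HL3; auto.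
        -- intros v Hv. eapply pos_sup; [exact (Hi v Hv)|]. intros a _ [h1 [h2 h3]]. split; auto. apply HL3; auto.
      * exists v0. split; auto. apply null_empty. intros a _ [h1 [_ h2]].
        apply HL3 in h1. destruct h1 as [_ h1]. exact (le_not_lt Hwo h1 h2).
    + (* strict limit case *)
      exists Y, (upd c e u), (fun x => x <> e /\ w x). split; auto.
      assert (HL : forall a, Lset (fun x => x = e \/ P x) Y (upd c e u) (fun x => x <> e /\ w x) a <-> L a /\ lt (beta a e) u).
      { intros a; unfold L, Lset; split.
        - intros [h1 [h2 h3]]. split; [split; [auto|split]|].
          + intros x Hx Hw. rewrite <- (upd_neq c e u x) by (intros ->; auto). apply h2; auto. split; auto. intros ->; auto.
          + intros x Hx Hw. rewrite <- (upd_neq c e u x) by (intros ->; auto). apply h3; auto. intros [_ h]; auto.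
          + rewrite <- (upd_eq c e u). apply h3; auto. intros [h _]; auto.
        - intros [[h1 [h2 h3]] h4]. split; [auto|split].
          + intros x [->|Hx] [Hne Hw]; [congruence|]. rewrite upd_neq by auto. auto.
          + intros x [->|Hx] Hw; [rewrite upd_eq; auto|]. rewrite upd_neq by (intros ->; auto). apply h3; auto.
            intros h; apply Hw; split; auto; intros ->; auto. }
      assert (HV : forall v, Vok (fun x => x = e \/ P x) (upd c e u) (fun x => x <> e /\ w x) v -> Vok P c w v /\ lt (v e) u).
      { intros v Hv. split.
        - intros x Hx Hw. rewrite <- (upd_neq c e u x) by (intros ->; auto). apply Hv; auto. intros [_ h]; auto.
        - rewrite <- (upd_eq c e u). apply Hv; auto. intros [h _]; auto. }
      assert (Hjt : joint (fun x => x = e \/ P x) Y (upd c e u) (fun x => x <> e /\ w x)).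
      { intros v Hv. destruct (HV v Hv) as [HvP Hve].
        set (v' := vmax (vmax v v0) v1).
        assert (Hv' : Vok P c w v') by (intros x Hx Hw; apply vmax_lt; [apply vmax_lt|]; auto).
        eapply pos_minus; [exact (HM v' Hv' (v e) Hve) | exact (N0' v' (fun x _ _ => le_tr Hwo (vmax_r v v0 x) (vmax_l _ v1 x)))
                                              | exact (N1' v' (fun x _ _ => vmax_r _ v1 x)) |].
        intros a _ [h1 [h2 h3]].
        destruct (lt_tot Hwo (beta a e) u) as [h4|[h4|h4]].
        - left. split; [apply HL; auto|]. intros x [->|Hx] Hw; auto.
          apply (le_lt_tr Hwo (le_tr Hwo (vmax_l v v0 x) (vmax_l _ v1 x))). apply h2; auto.
          intros h; apply Hw; split; auto; intros ->; auto.
        - right; right. auto.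
        - right; left. auto. }
      split; [|split]; auto.
      * assert (Hvb' : Vok (fun x => x = e \/ P x) (upd c e u) (fun x => x <> e /\ w x) (fun _ => bot)).
        { intros x [->|Hx] Hw; [rewrite upd_eq; auto|]. rewrite upd_neq by (intros ->; auto). apply Hvb; auto.
          intros h; apply Hw; split; auto; intros ->; auto. }
        eapply pos_sup; [exact (Hjt _ Hvb')|]. intros a _ [h _]; auto.
      * intros x [->|Hx] Hw.
        -- intros g Hg. rewrite upd_eq. intros f Hf. apply Hc. eauto.
        -- intros g Hg. rewrite upd_neq by (intros ->; auto). apply Hcf; auto.
           intros h; apply Hw; split; auto; intros ->; auto.
Qed.

End Finite.
Section FinWrap.

Lemma add_coord P e (He : lt e kappa) (HnP : ~ P e) Y c w (HYX : forall a, Y a -> X a) :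
  good P Y c w -> exists Y' c' w', (forall a, Y' a -> X a) /\ good (fun x => x = e \/ P x) Y' c' w'.
Proof.
  intros Hg. apply (@add_coord_aux P e He HnP c w top Y HYX Hg). exists (fun _ => bot). split.
  - destruct Hg as [Hp _]. exact (good_vbot Hp).
  - apply null_empty. intros a Ha [[HY _] [_ h]]. exact (lt_asym Hwo (Htop Ha He) h).
Qed.

Lemma finite_case K (HK : forall x, In x K -> lt x kappa) :
  exists Y c w, (forall a, Y a -> X a) /\ good (fun x => In x K) Y c w.
Proof.
  induction K as [|e K IH].
  - exists X, (fun _ => bot), (fun _ => False). split; auto.
    eapply good_ext; [|apply good_base]. intros; simpl; tauto.
  - destruct IH as [Y [c [w [HYX Hg]]]]; [intros; apply HK; right; auto|].
    destruct (classic (In e K)) as [Hin|Hin].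
    + exists Y, c, w. split; auto. eapply good_ext; [|exact Hg]. intros x; simpl; split; [auto|intros [->|h]; auto].
    + destruct (add_coord (P := fun x => In x K) (HK e (or_introl eq_refl)) Hin HYX Hg) as [Y' [c' [w' [h1 h2]]]].
      exists Y', c', w'. split; auto. eapply good_ext; [|exact h2]. intros x; simpl; split; intros [h|h]; auto.
Qed.

Definition next (x : T) : T :=
  match excluded_middle_informative (exists y, lt x y) with
  | left H => proj1_sig (minT Hwo (fun y => lt x y) H)
  | right _ => x end.
Lemma next_spec x : (exists y, lt x y) -> lt x (next x) /\ forall y, lt x y -> lte (next x) y.
Proof.
  intros H. unfold next. destruct (excluded_middle_informative _) as [h|h]; [|contradiction].
  destruct (minT _ _ _); simpl; auto.
Qed.
Fixpoint fin (n : nat) : T := match n with 0 => bot | S n => next (fin n) end.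

Lemma fin_cover n : (forall j, (j < n)%nat -> lt (fin j) kappa) ->
  forall x, lt x (fin n) -> exists j, (j < n)%nat /\ x = fin j.
Proof.
  induction n as [|n IH]; intros Hn x Hx.
  - simpl in Hx. exfalso. exact (le_not_lt Hwo (bot_le x) Hx).
  - simpl in Hx. assert (Hk : lt (fin n) kappa) by (apply Hn; auto).
    destruct (next_spec (ex_intro _ kappa Hk)) as [h1 h2].
    destruct (lt_tot Hwo x (fin n)) as [h|[h|h]].
    + destruct (IH (fun j hj => Hn j (PeanoNat.Nat.lt_lt_succ_r _ _ hj)) x h) as [j [hj ->]].
      exists j; split; auto.
    + exists n; split; auto.
    + exfalso. exact (le_not_lt Hwo (h2 x h) Hx).
Qed.

Lemma fin_incr n : lt (fin n) kappa -> lt (fin n) (fin (S n)).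
Proof. intros H. simpl. apply (next_spec (ex_intro _ kappa H)). Qed.

Lemma kappa_fin_or_inf :
  (exists K, forall x, In x K <-> lt x kappa) \/ (forall n, lt (fin n) kappa).
Proof.
  destruct (classic (forall n, lt (fin n) kappa)) as [H|H]; [right; auto|left].
  apply not_all_ex_not in H. destruct H as [n0 Hn0].
  assert (Hm : exists n, ~ lt (fin n) kappa /\ forall j, (j < n)%nat -> lt (fin j) kappa).
  { revert Hn0. induction n0 as [n0 IH] using (well_founded_ind Wf_nat.lt_wf). intros Hn0.
    destruct (classic (exists j, (j < n0)%nat /\ ~ lt (fin j) kappa)) as [[j [hj1 hj2]]|Hno].
    - exact (IH j hj1 hj2).
    - exists n0. split; auto. intros j hj. apply NNPP. intros h. apply Hno. eauto. }
  destruct Hm as [n [Hn Hlt]].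
  exists (map fin (seq 0 n)). intros x. rewrite in_map_iff. split.
  - intros [j [<- Hj]]. apply in_seq in Hj. apply Hlt. destruct Hj; auto.
  - intros Hx. assert (Hxn : lt x (fin n)) by exact (lt_le_tr Hwo Hx (not_lt_le Hwo Hn)).
    destruct (fin_cover Hlt Hxn) as [j [hj ->]]. exists j. split; auto. apply in_seq. split; auto with arith.
Qed.

End FinWrap.
Hypothesis Hinf : forall n, lt (fin n) kappa.
Section Card.

Definition smallT (A : Type) := exists g, lt g sigma /\ card_le A (sg g).
Definition small (S : T -> Prop) := smallT {x | S x}.

Lemma sg_eq g (x y : sg g) : proj1_sig x = proj1_sig y -> x = y.
Proof. destruct x, y; simpl; intros ->. f_equal. apply proof_irrelevance. Qed.

Lemma sg_eq_gen (P : T -> Prop) (x y : {z | P z}) : proj1_sig x = proj1_sig y -> x = y.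
Proof. destruct x, y; simpl; intros ->. f_equal. apply proof_irrelevance. Qed.

Lemma card_le_trans A B C : card_le A B -> card_le B C -> card_le A C.
Proof.
  intros [f Hf] [g Hg]. exists (fun x => g (f x)). intros x y H. apply Hf, Hg, H.
Qed.

Lemma card_le_seg g g' : lte g g' -> card_le (sg g) (sg g').
Proof.
  intros H. exists (fun x => exist _ (proj1_sig x) (lt_le_tr Hwo (proj2_sig x) H) : sg g').
  intros x y E. apply sg_eq. exact (f_equal (@proj1_sig _ _) E).
Qed.

Lemma smallT_inj A B : card_le A B -> smallT B -> smallT A.
Proof. intros H [g [Hg H']]. exists g; split; auto. eapply card_le_trans; eauto. Qed.

Lemma smallT_seg g : lt g sigma -> smallT (sg g).
Proof. intros H. exists g. split; auto. exists (fun x => x). auto. Qed.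

Lemma smallT_of_lt (A : Type) : card_lt A (sg sigma) -> smallT A.
Proof.
  intros Hlt. destruct (classic (inhabited A)) as [[a0]|Hne].
  2:{ exists l0. split; auto. exists (fun a => False_rect _ (Hne (inhabits a))). intros a. exfalso; apply Hne; constructor; auto. }
  set (F := fun (x : T) (rec : forall y, lt y x -> A) =>
    match excluded_middle_informative (exists a, forall y (H : lt y x), rec y H <> a) with
    | left H => proj1_sig (constructive_indefinite_description _ H)
    | right _ => a0 end).
  set (en := Fix (lt_wf Hwo) (fun _ => A) F).
  assert (Heq : forall x, en x = F x (fun y _ => en y)).
  { assert (Hext : forall (x0 : T) (f g : forall y : T, lt y x0 -> A), (forall (y : T) (p : lt y x0), f y p = g y p) -> F x0 f = F x0 g).
    { intros x0 f g Hfg.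
      assert (E : f = g).
      { apply functional_extensionality_dep; intros y. apply functional_extensionality_dep; intros p. apply Hfg. }
      subst; reflexivity. }
    intros x. exact (Fix_eq (lt_wf Hwo) (fun _ => A) F Hext x). }
  assert (Hfresh : forall x, (exists a, forall y, lt y x -> en y <> a) -> forall y, lt y x -> en y <> en x).
  { intros x [a Ha] y Hy. rewrite (Heq x). unfold F.
    destruct (excluded_middle_informative _) as [H|H].
    - destruct (constructive_indefinite_description _ H) as [b Hb]. simpl. exact (Hb y Hy).
    - exfalso. apply H. exists a. intros y0 H0. apply Ha; auto. }
  destruct (classic (forall x, lt x sigma -> exists a, forall y, lt y x -> en y <> a)) as [Hall|Hn].
  - exfalso. apply Hlt. exists (fun x : sg sigma => en (proj1_sig x)).
    intros [x hx] [y hy] E. simpl in E. apply sg_eq. simpl.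
    destruct (lt_tot Hwo x y) as [h|[h|h]]; auto.
    + exfalso. exact (Hfresh y (Hall y hy) x h E).
    + exfalso. exact (Hfresh x (Hall x hx) y h (eq_sym E)).
  - apply not_all_ex_not in Hn. destruct Hn as [x Hx]. apply imply_to_and in Hx. destruct Hx as [Hx Hnf].
    assert (Hc : forall a, exists y, lt y x /\ en y = a).
    { intros a. apply NNPP. intros Hn. apply Hnf. exists a. intros y Hy E. apply Hn. eauto. }
    exists x. split; auto.
    exists (fun a => exist _ (proj1_sig (constructive_indefinite_description _ (Hc a))) (proj1 (proj2_sig (constructive_indefinite_description _ (Hc a)))) : sg x).
    intros a b E. apply (f_equal (@proj1_sig _ _)) in E. simpl in E.
    rewrite <- (proj2 (proj2_sig (constructive_indefinite_description _ (Hc a)))).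
    rewrite <- (proj2 (proj2_sig (constructive_indefinite_description _ (Hc b)))).
    f_equal. exact E.
Qed.

Definition k0 : sg kappa := exist _ (fin 0) (Hinf 0).
Definition k1 : sg kappa := exist _ (fin 1) (Hinf 1).
Lemma k01 : proj1_sig k0 <> proj1_sig k1.
Proof. simpl. intros E. assert (H := fin_incr 0 (Hinf 0)). simpl in H. rewrite <- E in H. exact (lt_irr Hwo H). Qed.

Lemma smallT_fun A : smallT A -> smallT (sg kappa -> A).
Proof.
  intros [g [Hg [J HJ]]].
  apply smallT_inj with (B := sg kappa -> sg g).
  - exists (fun f k => J (f k)). intros f f' E. apply functional_extensionality. intros k.
    apply HJ. exact (f_equal (fun h => h k) E).
  - apply smallT_of_lt. apply Hpow; auto.
Qed.

Lemma smallT_prod A B : smallT A -> smallT B -> smallT (A * B).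
Proof.
  intros [a [Ha [J1 H1]]] [b [Hb [J2 H2]]].
  set (m := if excluded_middle_informative (lt a b) then b else a).
  assert (Ham : lte a m) by (unfold m; destruct (excluded_middle_informative _); [left|right]; auto).
  assert (Hbm : lte b m) by (unfold m; destruct (excluded_middle_informative _); [right; auto| apply (not_lt_le Hwo); auto]).
  assert (Hm : lt m sigma) by (unfold m; destruct (excluded_middle_informative _); auto).
  destruct (card_le_seg Ham) as [e1 He1]. destruct (card_le_seg Hbm) as [e2 He2].
  apply smallT_inj with (B := sg kappa -> sg m).
  - exists (fun p k => if excluded_middle_informative (proj1_sig k = proj1_sig k0) then e1 (J1 (fst p)) else e2 (J2 (snd p))).
    intros [x y] [x' y'] E.
    assert (E0 := f_equal (fun h => h k0) E). assert (E1 := f_equal (fun h => h k1) E). cbv beta in E0, E1.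
    revert E0 E1.
    destruct (excluded_middle_informative (proj1_sig k0 = proj1_sig k0)) as [_|h]; [|congruence].
    destruct (excluded_middle_informative (proj1_sig k1 = proj1_sig k0)) as [h|_]; [exfalso; apply k01; auto|].
    intros E0 E1. simpl in E0, E1.
    f_equal; [apply H1, He1; auto | apply H2, He2; auto].
  - apply smallT_fun, smallT_seg; auto.
Qed.

Lemma smallT_kappa : smallT (sg kappa).
Proof. apply smallT_seg, kappa_lt_sigma. Qed.

Lemma smallT_bool : smallT bool.
Proof.
  apply smallT_inj with (B := sg kappa); [|exact smallT_kappa].
  exists (fun b : bool => if b then k1 else k0). intros [|] [|] E; auto; exfalso; apply k01.
  - rewrite E; auto.
  - rewrite E; auto.
Qed.

Lemma smallT_sigma (I : Type) (B : I -> Type) : smallT I -> (forall i, smallT (B i)) -> smallT {i : I & B i}.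
Proof.
  intros [a [Ha [J HJ]]] HB.
  set (bd := fun i => proj1_sig (constructive_indefinite_description _ (HB i))).
  assert (Hbd : forall i, lt (bd i) sigma /\ card_le (B i) (sg (bd i))).
  { intros i. unfold bd. destruct (constructive_indefinite_description _ _). simpl. auto. }
  set (h := fun k : sg a => match excluded_middle_informative (exists i, J i = k) with
             | left H => exist _ (bd (proj1_sig (constructive_indefinite_description _ H))) (proj1 (Hbd _)) : sg sigma
             | right _ => exist _ l0 Hl0 end).
  destruct Hsreg as [_ Hm].
  assert (Hnc : ~ cofinal_map h) by (intros Hc; apply (Hm a Ha); eauto).
  destruct (notcof_bound Hwo Hnc) as [x [Hx Hxb]].
  assert (Hbx : forall i, lt (bd i) x).
  { intros i. specialize (Hxb (J i)). unfold h in Hxb.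
    destruct (excluded_middle_informative _) as [H|H]; [|exfalso; apply H; eauto].
    simpl in Hxb. destruct (constructive_indefinite_description _ H) as [i' Hi']. simpl in Hxb.
    apply HJ in Hi'. subst; auto. }
  set (inj := fun i => proj1_sig (constructive_indefinite_description _ (proj2 (Hbd i)))).
  assert (Hinj : forall i b b', inj i b = inj i b' -> b = b').
  { intros i. unfold inj. destruct (constructive_indefinite_description _ _). simpl. auto. }
  apply smallT_inj with (B := (I * sg x)%type).
  - exists (fun p => (projT1 p, exist _ (proj1_sig (inj (projT1 p) (projT2 p))) (lt_tr Hwo (proj2_sig (inj (projT1 p) (projT2 p))) (Hbx (projT1 p))) : sg x)).
    intros [i b] [i' b'] E. simpl in E. injection E. intros E2 E1. subst i'.
    apply sg_eq in E2. apply Hinj in E2. subst. reflexivity.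
  - apply smallT_prod; [exists a; split; [auto|exists J; auto] | apply smallT_seg; auto].
Qed.

Lemma small_sub (S S' : T -> Prop) : small S -> (forall x, S' x -> S x) -> small S'.
Proof.
  intros H Hs. apply smallT_inj with (B := {x | S x}); auto.
  exists (fun x => exist _ (proj1_sig x) (Hs _ (proj2_sig x))). intros [x hx] [y hy] E.
  apply (f_equal (@proj1_sig _ _)) in E. simpl in E. subst. f_equal. apply proof_irrelevance.
Qed.

Lemma small_image (A : Type) (F : A -> T) : smallT A -> small (fun x => exists a, x = F a).
Proof.
  intros H. apply smallT_inj with (B := A); auto.
  exists (fun x : {x | exists a, x = F a} => proj1_sig (constructive_indefinite_description (fun a => proj1_sig x = F a) (proj2_sig x))).
  intros x y E. apply sg_eq_gen.
  rewrite (proj2_sig (constructive_indefinite_description (fun a => proj1_sig x = F a) (proj2_sig x))).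
  rewrite (proj2_sig (constructive_indefinite_description (fun a => proj1_sig y = F a) (proj2_sig y))).
  f_equal. exact E.
Qed.

Lemma small_bigunion (I : Type) (S : I -> T -> Prop) : smallT I -> (forall i, small (S i)) -> small (fun x => exists i, S i x).
Proof.
  intros HI HS.
  eapply small_sub; [apply (small_image (fun p : {i : I & {x | S i x}} => proj1_sig (projT2 p))); apply smallT_sigma; auto|].
  intros x [i Hx]. exists (existT _ i (exist _ x Hx)). reflexivity.
Qed.

Lemma small_union2 S1 S2 : small S1 -> small S2 -> small (fun x => S1 x \/ S2 x).
Proof.
  intros H1 H2. eapply small_sub; [apply (small_bigunion (I := bool) (fun b => if b then S1 else S2)); [exact smallT_bool|intros [|]; auto]|].
  intros x [h|h]; [exists true|exists false]; auto.
Qed.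

Lemma small_single x : small (fun y => y = x).
Proof.
  apply smallT_inj with (B := sg kappa); [|exact smallT_kappa].
  exists (fun _ => k0). intros p q _. apply sg_eq_gen. rewrite (proj2_sig p), (proj2_sig q). reflexivity.
Qed.

End Card.
Section Delta.

Lemma lelt x y : lte x y -> x <> y -> lt x y.
Proof. intros [h|h] hn; auto. contradiction. Qed.

Lemma coding : (forall y, lt y sigma -> (exists x, lt x y) -> exists f : sg kappa -> sg y, cofinal_map f) ->
  forall y, lt y sigma -> exists phi : sg y -> list (sg kappa), (forall a b, phi a = phi b -> a = b) /\ forall a, phi a <> nil.
Proof.
  intros H y. induction y as [y IH] using (well_founded_ind (lt_wf Hwo)). intros Hy.
  destruct (classic (exists x, lt x y)) as [Hne|Hemp].
  2:{ exists (fun _ => k0 :: nil). split; [|intros; discriminate].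
      intros a; exfalso; apply Hemp; exists (proj1_sig a); exact (proj2_sig a). }
  destruct (H y Hy Hne) as [f Hf].
  assert (Hsub : forall i, exists phi : sg (proj1_sig (f i)) -> list (sg kappa),
                   (forall a b, phi a = phi b -> a = b) /\ forall a, phi a <> nil).
  { intros i; apply IH; [exact (proj2_sig (f i)) | exact (lt_tr Hwo (proj2_sig (f i)) Hy)]. }
  set (phi := fun i => proj1_sig (constructive_indefinite_description _ (Hsub i))).
  assert (Hphi : forall i, (forall a b, phi i a = phi i b -> a = b) /\ forall a, phi i a <> nil).
  { intros i. unfold phi. destruct (constructive_indefinite_description _ _); simpl; auto. }
  assert (Hch : forall a : sg y, exists i, lte (proj1_sig a) (proj1_sig (f i))) by (intros a; exact (Hf _ (proj2_sig a))).
  set (ch := fun a => proj1_sig (constructive_indefinite_description _ (Hch a))).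
  assert (Hchs : forall a, lte (proj1_sig a) (proj1_sig (f (ch a)))).
  { intros a. unfold ch. destruct (constructive_indefinite_description _ _); simpl; auto. }
  exists (fun a => match excluded_middle_informative (proj1_sig a = proj1_sig (f (ch a))) with
           | left _ => ch a :: nil
           | right Hn => ch a :: phi (ch a) (exist _ (proj1_sig a) (lelt (Hchs a) Hn)) end).
  split.
  - intros a b E. revert E.
    destruct (excluded_middle_informative (proj1_sig a = proj1_sig (f (ch a)))) as [Ea|Na];
    destruct (excluded_middle_informative (proj1_sig b = proj1_sig (f (ch b)))) as [Eb|Nb];
    intros E; injection E.
    + intros E1. apply sg_eq. rewrite Ea, Eb, E1. reflexivity.
    + intros E1 E2. exfalso. exact (proj2 (Hphi (ch b)) _ (eq_sym E1)).
    + intros E1 E2. exfalso. exact (proj2 (Hphi (ch a)) _ E1).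
    + intros E2 E1.
      assert (Hgen : forall i j (e : i = j) (p : lt (proj1_sig a) (proj1_sig (f i))) (q : lt (proj1_sig b) (proj1_sig (f j))),
                 phi i (exist _ _ p) = phi j (exist _ _ q) -> a = b).
      { intros i j e. subst j. intros p q Heq. apply (proj1 (Hphi i)) in Heq.
        apply sg_eq. exact (f_equal (@proj1_sig _ _) Heq). }
      exact (Hgen _ _ E1 _ _ E2).
  - intros a. destruct (excluded_middle_informative _); discriminate.
Qed.

Lemma fin_lt n m : (n < m)%nat -> lt (fin n) (fin m).
Proof.
  induction m as [|m IH]; intros H; [inversion H|].
  assert (Hm := fin_incr m (Hinf m)).
  destruct (PeanoNat.Nat.eq_dec n m) as [->|Hne]; auto.
  apply (lt_tr Hwo (IH ltac:(lia)) Hm).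
Qed.

Lemma fin_inj n m : fin n = fin m -> n = m.
Proof.
  intros E. destruct (PeanoNat.Nat.lt_trichotomy n m) as [h|[h|h]]; auto; exfalso.
  - assert (H := fin_lt h). rewrite E in H. exact (lt_irr Hwo H).
  - assert (H := fin_lt h). rewrite E in H. exact (lt_irr Hwo H).
Qed.

Definition kn (n : nat) : sg kappa := exist _ (fin n) (Hinf n).

Lemma list_small : smallT (list (sg kappa)).
Proof.
  set (kl0 := exist _ kappa kappa_lt_l0 : sg l0).
  set (emb := fun k : sg kappa => exist _ (proj1_sig k) (lt_tr Hwo (proj2_sig k) kappa_lt_l0) : sg l0).
  set (F := fun (l : list (sg kappa)) (k : sg kappa) =>
        match excluded_middle_informative (exists n, proj1_sig k = fin n /\ (n < length l)%nat) with
        | left H => emb (nth (proj1_sig (constructive_indefinite_description _ H)) l k0)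
        | right _ => kl0 end).
  assert (HF : forall l n, F l (kn n) = if excluded_middle_informative (n < length l)%nat then emb (nth n l k0) else kl0).
  { intros l n. unfold F. destruct (excluded_middle_informative (exists n0, _ /\ _)) as [H|H].
    - destruct (constructive_indefinite_description _ H) as [n' [h1 h2]]. simpl.
      simpl in h1. apply fin_inj in h1. subst n'.
      destruct (excluded_middle_informative _); [reflexivity|contradiction].
    - destruct (excluded_middle_informative _) as [h|h]; [|reflexivity]. exfalso. apply H. exists n. split; auto. }
  assert (Hne : forall k, emb k <> kl0).
  { intros k E. apply (f_equal (@proj1_sig _ _)) in E. simpl in E.
    assert (Hk := proj2_sig k). simpl in Hk. rewrite E in Hk. exact (lt_irr Hwo Hk). }
  apply smallT_inj with (B := sg kappa -> sg l0).
  2:{ apply smallT_fun, smallT_seg; auto. }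
  exists F. intros l l' E.
  assert (Hn : forall n, F l (kn n) = F l' (kn n)) by (intros n; rewrite E; auto).
  assert (Hlen : forall n, (n < length l)%nat <-> (n < length l')%nat).
  { intros n. specialize (Hn n). rewrite !HF in Hn.
    destruct (excluded_middle_informative (n < length l)%nat); destruct (excluded_middle_informative (n < length l')%nat);
      split; intros; auto; try contradiction; exfalso; eapply Hne; eauto. }
  assert (HL : length l = length l').
  { destruct (PeanoNat.Nat.lt_trichotomy (length l) (length l')) as [h|[h|h]]; auto; exfalso.
    - apply (PeanoNat.Nat.lt_irrefl (length l)). apply Hlen; auto.
    - apply (PeanoNat.Nat.lt_irrefl (length l')). apply Hlen; auto. }
  apply nth_ext with (d := k0) (d' := k0); auto.
  intros n Hnl. specialize (Hn n). rewrite !HF in Hn.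
  destruct (excluded_middle_informative (n < length l)%nat); [|contradiction].
  destruct (excluded_middle_informative (n < length l')%nat) as [_|h]; [|exfalso; apply h; apply Hlen; auto].
  apply sg_eq. exact (f_equal (@proj1_sig _ _) Hn).
Qed.

Definition unopt (B : Type) (o : option B) : o <> None -> B :=
  match o as o0 return (o0 <> None -> B) with
  | Some x => fun _ => x
  | None => fun H => False_rect _ (H eq_refl) end.
Lemma unopt_eq (B : Type) (o : option B) (H : o <> None) : Some (unopt H) = o.
Proof. destruct o; simpl; [reflexivity| exfalso; apply H; reflexivity]. Qed.

Lemma opt_copy (A B : Type) (K : A * bool -> option B) : (forall p q, K p = K q -> p = q) -> card_le A B.
Proof.
  intros HK.
  assert (Hb : exists b, forall a, K (a, b) <> None).
  { destruct (classic (exists a, K (a, true) = None)) as [[a Ha]|Hn].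
    - exists false. intros a' E. rewrite <- Ha in E. apply HK in E. discriminate.
    - exists true. intros a Ha. apply Hn; eauto. }
  destruct Hb as [b Hb].
  exists (fun a => unopt (Hb a)).
  intros a a' E.
  assert (E' : K (a, b) = K (a', b)).
  { rewrite <- (unopt_eq (Hb a)), <- (unopt_eq (Hb a')), E. reflexivity. }
  apply HK in E'. congruence.
Qed.

Lemma delta_exists : exists d, lt d sigma /\ (exists x, lt x d) /\ forall f : sg kappa -> sg d, ~ cofinal_map f.
Proof.
  apply NNPP; intros Hn.
  assert (H : forall y, lt y sigma -> (exists x, lt x y) -> exists f : sg kappa -> sg y, cofinal_map f).
  { intros y Hy Hx. apply NNPP; intros Hnf. apply Hn. exists y. split; auto. split; auto.
    intros f Hf. apply Hnf; eauto. }
  destruct list_small as [g0 [Hg0 Jl]].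
  assert (Pg0 : forall y, lt y sigma -> card_le (sg y) (sg g0)).
  { intros y Hy. destruct (coding H Hy) as [phi [Hphi _]]. eapply card_le_trans; [|exact Jl]. exists phi; auto. }
  destruct (wf_min Hwo (fun g => lt g sigma /\ forall y, lt y sigma -> card_le (sg y) (sg g)) (ex_intro _ g0 (conj Hg0 Pg0)))
    as [g [[Hg Pg] Hmin]].
  assert (Hfun : card_le (sg kappa -> sg g) (sg g)).
  { destruct (smallT_fun (smallT_seg Hg)) as [g' [Hg' H']]. eapply card_le_trans; [exact H'|apply Pg; auto]. }
  destruct Hfun as [J HJ].
  destruct two_below as [gg [x0 [x1 [Hgg [H0 [H1 H01]]]]]].
  destruct (Pg gg Hgg) as [J2 HJ2].
  set (a0 := J2 (exist _ x0 H0)). set (a1 := J2 (exist _ x1 H1)).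
  assert (Ha01 : a0 <> a1).
  { intros E. apply HJ2 in E. apply (f_equal (@proj1_sig _ _)) in E. simpl in E. auto. }
  set (pr := fun (p : sg g * bool) => J (fun k => if excluded_middle_informative (proj1_sig k = proj1_sig k0) then fst p
                                               else if snd p then a1 else a0)).
  assert (Hpr : forall p q, pr p = pr q -> p = q).
  { intros [x b] [x' b'] E. apply HJ in E.
    assert (E0 := f_equal (fun h => h k0) E). assert (E1 := f_equal (fun h => h k1) E). cbv beta in E0, E1.
    revert E0 E1.
    destruct (excluded_middle_informative (proj1_sig k0 = proj1_sig k0)) as [_|h]; [|congruence].
    destruct (excluded_middle_informative (proj1_sig k1 = proj1_sig k0)) as [h|_]; [exfalso; apply k01; auto|].
    simpl. intros E0 E1. subst x'. destruct b, b'; auto; exfalso; apply Ha01; auto. }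
  destruct (H g Hg (ex_intro _ (proj1_sig a0) (proj2_sig a0))) as [f Hf].
  set (Finv := fun x => match excluded_middle_informative (exists h, J h = x) with
                        | left Hx => proj1_sig (constructive_indefinite_description _ Hx)
                        | right _ => fun _ : sg kappa => a0 end).
  assert (HFinv : forall h, Finv (J h) = h).
  { intros h. unfold Finv. destruct (excluded_middle_informative _) as [Hx|Hx]; [|exfalso; apply Hx; eauto].
    destruct (constructive_indefinite_description _ Hx) as [h' Hh']. simpl. apply HJ; auto. }
  assert (Hclaim : forall i, exists y : sg g, forall x : sg g, lte (proj1_sig x) (proj1_sig (f i)) -> Finv x i <> y).
  { intros i. apply NNPP; intros Hn2.
    assert (Hs : forall y, exists x : sg g, lte (proj1_sig x) (proj1_sig (f i)) /\ Finv x i = y).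
    { intros y. apply NNPP; intros Hn3. apply Hn2. exists y. intros x Hx E. apply Hn3; eauto. }
    set (psi := fun y => proj1_sig (constructive_indefinite_description _ (Hs y))).
    assert (Hpsi : forall y, lte (proj1_sig (psi y)) (proj1_sig (f i)) /\ Finv (psi y) i = y).
    { intros y. unfold psi. destruct (constructive_indefinite_description _ _); simpl; auto. }
    assert (Hcl : card_le (sg g) (sg (proj1_sig (f i)))).
    { apply (opt_copy (fun p => match excluded_middle_informative (proj1_sig (psi (pr p)) = proj1_sig (f i)) with
                               | left _ => None
                               | right Hne => Some (exist _ _ (lelt (proj1 (Hpsi (pr p))) Hne)) end)).
      intros p q E.
      assert (Hpq : psi (pr p) = psi (pr q) -> p = q).
      { intros E'. apply Hpr. rewrite <- (proj2 (Hpsi (pr p))), <- (proj2 (Hpsi (pr q))), E'. reflexivity. }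
      apply Hpq. revert E.
      destruct (excluded_middle_informative (proj1_sig (psi (pr p)) = proj1_sig (f i))) as [Ep|Np];
      destruct (excluded_middle_informative (proj1_sig (psi (pr q)) = proj1_sig (f i))) as [Eq|Nq];
      intros E; try discriminate.
      - apply sg_eq. rewrite Ep, Eq. reflexivity.
      - injection E. intros E'. apply sg_eq. exact E'. }
    apply (Hmin (proj1_sig (f i))); [|exact (proj2_sig (f i))].
    split; [exact (lt_tr Hwo (proj2_sig (f i)) Hg)|].
    intros y Hy. eapply card_le_trans; [apply Pg; auto|exact Hcl]. }
  set (h := fun i => proj1_sig (constructive_indefinite_description _ (Hclaim i))).
  assert (Hh : forall i x, lte (proj1_sig x) (proj1_sig (f i)) -> Finv x i <> h i).
  { intros i. unfold h. destruct (constructive_indefinite_description _ _); simpl; auto. }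
  destruct (Hf (proj1_sig (J h)) (proj2_sig (J h))) as [i Hi].
  apply (Hh i (J h) Hi). rewrite HFinv. reflexivity.
Qed.

End Delta.
Section Closure.

Definition Pk := fun e => lt e kappa.
Definition wset (bits : T -> bool) := fun e => bits e = true.
Definition Wex c bits := exists v, Vok Pk c (wset bits) v /\
   null (fun a => Lset Pk X c (wset bits) a /\ above Pk (wset bits) v a).
Definition W c bits : T -> T :=
  match excluded_middle_informative (Wex c bits) with
  | left H => proj1_sig (constructive_indefinite_description _ H)
  | right _ => fun _ => top end.
Lemma W_spec c bits : Wex c bits -> Vok Pk c (wset bits) (W c bits) /\
   null (fun a => Lset Pk X c (wset bits) a /\ above Pk (wset bits) (W c bits) a).
Proof.
  intros H. unfold W. destruct (excluded_middle_informative _) as [h|h]; [|contradiction].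
  destruct (constructive_indefinite_description _ h); simpl; auto.
Qed.
Definition norm (c : T -> T) (bits : T -> bool) := forall e, ~ lt e kappa -> c e = bot /\ bits e = false.
Definition fcof (b : T) : sg (CF b) -> sg b := proj1_sig (constructive_indefinite_description _ (proj1 (CF_spec b))).
Lemma fcof_cof b : cofinal_map (fcof b).
Proof. unfold fcof. destruct (constructive_indefinite_description _ _); simpl; auto. Qed.

Inductive InC : T -> T -> Prop :=
 | C_top : forall j, InC j top
 | C_old : forall j j' x, lt j' j -> InC j' x -> InC j x
 | C_wit : forall j j' c bits e, lt j' j -> (forall e', lt e' kappa -> InC j' (c e')) -> norm c bits -> lt e kappa -> InC j (W c bits e)
 | C_cof : forall j j' b (i : sg (CF b)), lt j' j -> InC j' b -> lt (CF b) sigma -> InC j (proj1_sig (fcof b i)).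

Definition WitSet (S : T -> Prop) := fun x => exists c bits e, (forall e', lt e' kappa -> S (c e')) /\ norm c bits /\ lt e kappa /\ x = W c bits e.
Definition CofSet (S : T -> Prop) := fun x => exists b (i : sg (CF b)), S b /\ lt (CF b) sigma /\ x = proj1_sig (fcof b i).

Lemma sig_eq_any (A : Type) (P : A -> Prop) (x y : {z | P z}) : proj1_sig x = proj1_sig y -> x = y.
Proof. destruct x, y; simpl; intros ->. f_equal. apply proof_irrelevance. Qed.

Lemma labels_small S : small S ->
  smallT {p : (T -> T) * (T -> bool) | (forall e, lt e kappa -> S (fst p e)) /\ norm (fst p) (snd p)}.
Proof.
  intros H. apply smallT_inj with (B := ((sg kappa -> {x | S x}) * (sg kappa -> bool))%type).
  - exists (fun p : {p : (T -> T) * (T -> bool) | (forall e, lt e kappa -> S (fst p e)) /\ norm (fst p) (snd p)} =>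
              ((fun k : sg kappa => exist (fun x => S x) (fst (proj1_sig p) (proj1_sig k)) (proj1 (proj2_sig p) (proj1_sig k) (proj2_sig k))),
               (fun k : sg kappa => snd (proj1_sig p) (proj1_sig k)))).
    intros [[c b] [h1 h2]] [[c' b'] [h1' h2']] E. apply sig_eq_any. simpl in *.
    injection E. intros Eb Ec.
    assert (Hc : forall e, lt e kappa -> c e = c' e).
    { intros e He. assert (E' := f_equal (fun f => proj1_sig (f (exist _ e He))) Ec). simpl in E'. exact E'. }
    assert (Hb : forall e, lt e kappa -> b e = b' e).
    { intros e He. exact (f_equal (fun f => f (exist _ e He)) Eb). }
    f_equal; apply functional_extensionality; intros e; destruct (classic (lt e kappa)) as [He|He]; auto.
    + rewrite (proj1 (h2 e He)), (proj1 (h2' e He)). reflexivity.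
    + rewrite (proj2 (h2 e He)), (proj2 (h2' e He)). reflexivity.
  - apply smallT_prod; apply smallT_fun; [exact H | exact smallT_bool].
Qed.

Lemma WitSet_small S : small S -> small (WitSet S).
Proof.
  intros H.
  set (A := {q : ((T -> T) * (T -> bool)) * T | ((forall e, lt e kappa -> S (fst (fst q) e)) /\ norm (fst (fst q)) (snd (fst q))) /\ lt (snd q) kappa}).
  assert (HA : smallT A).
  { apply smallT_inj with (B := ({p : (T -> T) * (T -> bool) | (forall e, lt e kappa -> S (fst p e)) /\ norm (fst p) (snd p)} * sg kappa)%type).
    - exists (fun q => (exist _ (fst (proj1_sig q)) (proj1 (proj2_sig q)), exist _ (snd (proj1_sig q)) (proj2 (proj2_sig q)) : sg kappa)).
      intros [[p e] hq] [[p' e'] hq'] E. simpl in E. injection E. intros E2 E1. apply sig_eq_any. simpl.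
      congruence.
    - apply smallT_prod; [apply labels_small; auto| exact smallT_kappa]. }
  eapply small_sub; [apply (small_image (fun q : A => W (fst (fst (proj1_sig q))) (snd (fst (proj1_sig q))) (snd (proj1_sig q)))); exact HA|].
  intros x [c [bits [e [h1 [h2 [h3 ->]]]]]].
  exists (exist _ ((c, bits), e) (conj (conj h1 h2) h3) : A). reflexivity.
Qed.

Lemma CofSet_small S : small S -> small (CofSet S).
Proof.
  intros H.
  eapply small_sub.
  - apply (small_image (fun p : {b : {b | S b /\ lt (CF b) sigma} & sg (CF (proj1_sig b))} => proj1_sig (fcof (proj1_sig (projT1 p)) (projT2 p)))).
    apply smallT_sigma.
    + apply smallT_inj with (B := {x | S x}); auto.
      exists (fun b => exist _ (proj1_sig b) (proj1 (proj2_sig b))). intros b b' E. apply sig_eq_any.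
      exact (f_equal (@proj1_sig _ _) E).
    + intros b. apply smallT_seg. exact (proj2 (proj2_sig b)).
  - intros x [b [i [h1 [h2 ->]]]]. exists (existT _ (exist _ b (conj h1 h2)) i). reflexivity.
Qed.

Lemma InC_small j : lt j sigma -> small (InC j).
Proof.
  induction j as [j IH] using (well_founded_ind (lt_wf Hwo)). intros Hj.
  eapply small_sub.
  - apply small_union2; [apply (small_single top)|].
    apply (small_bigunion (I := sg j) (fun j' x => InC (proj1_sig j') x \/ WitSet (InC (proj1_sig j')) x \/ CofSet (InC (proj1_sig j')) x)).
    + apply smallT_seg; auto.
    + intros j'. assert (Hj' : lt (proj1_sig j') sigma) by exact (lt_tr Hwo (proj2_sig j') Hj).
      apply small_union2; [apply IH; auto; exact (proj2_sig j')|].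
      apply small_union2; [apply WitSet_small | apply CofSet_small]; apply IH; auto; exact (proj2_sig j').
  - intros x H. inversion H as [j0 E1 E2|j0 j' x0 h1 h2 E1 E2|j0 j' c bits e h1 h2 h3 h4 E1 E2|j0 j' b i h1 h2 h3 E1 E2]; subst.
    + left; reflexivity.
    + right. exists (exist _ j' h1). left; auto.
    + right. exists (exist _ j' h1). right; left. exists c, bits, e. split; [exact h2|split; [exact h3|split; [exact h4|reflexivity]]].
    + right. exists (exist _ j' h1). right; right. exists b, i. split; [exact h2|split; [exact h3|reflexivity]].
Qed.

Lemma InC_stable j x : InC j x -> x = top \/ exists j', lt j' j /\ forall j'', lt j' j'' -> InC j'' x.
Proof.
  intros H. inversion H as [j0 E1 E2|j0 j' x0 h1 h2 E1 E2|j0 j' c bits e h1 h2 h3 h4 E1 E2|j0 j' b i h1 h2 h3 E1 E2]; subst.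
  - left; reflexivity.
  - right. exists j'. split; auto. intros j'' h. apply (C_old h h2).
  - right. exists j'. split; auto. intros j'' h. apply (C_wit h h2 h3 h4).
  - right. exists j'. split; auto. intros j'' h. apply (C_cof i h h2 h3).
Qed.

End Closure.
Section Atom.
Variable d : T.
Hypothesis Hd : lt d sigma.
Hypothesis Hd0 : exists x, lt x d.
Hypothesis Hnc : forall f : sg kappa -> sg d, ~ cofinal_map f.

Lemma bound (c : T -> T) : (forall e, lt e kappa -> InC d (c e)) -> exists m, lt m d /\ forall e, lt e kappa -> InC m (c e).
Proof.
  intros Hc. destruct Hd0 as [x0 Hx0].
  set (mp := fun k : sg kappa =>
    match excluded_middle_informative (exists j', lt j' d /\ forall j'', lt j' j'' -> InC j'' (c (proj1_sig k))) with
    | left H => exist _ (proj1_sig (constructive_indefinite_description _ H)) (proj1 (proj2_sig (constructive_indefinite_description _ H))) : sg d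
    | right _ => exist _ x0 Hx0 end).
  destruct (notcof_bound Hwo (@Hnc mp)) as [m [Hm Hmb]].
  exists m. split; auto. intros e He. specialize (Hmb (exist _ e He)). unfold mp in Hmb.
  destruct (excluded_middle_informative _) as [H|H]; simpl in Hmb.
  - exact (proj2 (proj2_sig (constructive_indefinite_description _ H)) m Hmb).
  - destruct (InC_stable (Hc e He)) as [Ht|Hex]; [rewrite Ht; apply C_top | contradiction].
Qed.

Definition minC (y : T) : T :=
  match excluded_middle_informative (exists x, InC d x /\ lte y x) with
  | left H => proj1_sig (minT Hwo _ H)
  | right _ => top end.
Lemma minC_spec y : lte y top -> InC d (minC y) /\ lte y (minC y) /\ forall x, InC d x -> lte y x -> lte (minC y) x.
Proof.
  intros Hy. unfold minC. destruct (excluded_middle_informative _) as [H|H].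
  - destruct (minT Hwo _ H) as [z [[h1 h2] h3]]. simpl. split; [auto|split; [auto|]].
    intros x Hx Hyx. apply h3. split; auto.
  - exfalso. apply H. exists top. split; [apply C_top|auto].
Qed.

Definition labc (a : T) : T -> T := fun e =>
  if excluded_middle_informative (lt e kappa) then minC (beta a e) else bot.
Definition labb (a : T) : T -> bool := fun e =>
  if excluded_middle_informative (lt e kappa) then
    (if excluded_middle_informative (beta a e = labc a e) then true else false) else false.

Lemma labc_k a e : lt e kappa -> labc a e = minC (beta a e).
Proof. intros He. unfold labc. destruct (excluded_middle_informative _); [reflexivity|contradiction]. Qed.
Lemma labb_k a e : lt e kappa -> (labb a e = true <-> beta a e = labc a e).
Proof.
  intros He. unfold labb. destruct (excluded_middle_informative (lt e kappa)); [|contradiction].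
  destruct (excluded_middle_informative _); split; intros; auto; try discriminate; contradiction.
Qed.

Lemma infinite_case_d : exists c w, good Pk X c w.
Proof.
  destruct (labels_small (InC_small Hd)) as [g [Hg [J HJ]]].
  assert (Hlab : forall a, X a -> (forall e, lt e kappa -> InC d (fst (labc a, labb a) e)) /\ norm (fst (labc a, labb a)) (snd (labc a, labb a))).
  { intros a Ha. simpl. split.
    - intros e He. rewrite labc_k by auto. apply minC_spec. left. apply Htop; auto.
    - intros e He. unfold labc, labb. destruct (excluded_middle_informative _); [contradiction|]. split; reflexivity. }
  set (Fib := fun (i : sg g) a => X a /\ exists p : {p : (T -> T) * (T -> bool) | (forall e, lt e kappa -> InC d (fst p e)) /\ norm (fst p) (snd p)},
                  J p = i /\ proj1_sig p = (labc a, labb a)).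
  assert (Hex : exists i, pos (Fib i)).
  { apply NNPP; intro Hn. apply HXp.
    eapply null_sub; [apply (null_big Hg Fib); intros i; unfold null; apply NNPP; intro h; apply Hn; exists i; exact h|].
    intros a _ HXa. exists (J (exist _ (labc a, labb a) (Hlab a HXa))). split; auto.
    exists (exist _ (labc a, labb a) (Hlab a HXa)). split; reflexivity. }
  destruct Hex as [i Hi]. destruct (pos_ex Hi) as [a0 [Ha0t [HXa0 [p0 [Hp0 Hp0l]]]]].
  set (c := fst (proj1_sig p0)). set (bits := snd (proj1_sig p0)).
  set (A := fun a => X a /\ labc a = c /\ labb a = bits).
  assert (HA : pos A).
  { eapply pos_sup; [exact Hi|]. intros a _ [HXa [p [Hp Hpl]]]. split; auto.
    rewrite <- Hp0 in Hp. apply HJ in Hp. subst p. unfold c, bits. rewrite Hpl. split; reflexivity. }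
  assert (Hc : forall e, lt e kappa -> InC d (c e)) by exact (proj1 (proj2_sig p0)).
  assert (Hnorm : norm c bits) by exact (proj2 (proj2_sig p0)).
  assert (KA : forall a, A a -> forall e, lt e kappa -> c e = minC (beta a e) /\ (bits e = true <-> beta a e = c e)).
  { intros a [HXa [Hlc Hlb]] e He. split.
    - rewrite <- Hlc. apply labc_k; auto.
    - rewrite <- Hlb, <- Hlc. apply labb_k; auto. }
  assert (HAL : forall a, A a -> Lset Pk X c (wset bits) a).
  { intros a HAa. split; [exact (proj1 HAa)|split].
    - intros e He Hw. apply (proj2 (KA a HAa e He)). exact Hw.
    - intros e He Hw. apply lelt.
      + rewrite (proj1 (KA a HAa e He)). apply minC_spec. left. apply Htop; auto. apply HX. exact (proj1 HAa).
      + intros E. apply Hw. apply (proj2 (KA a HAa e He)). exact E. }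
  assert (Hmu : forall a, A a -> forall e, lt e kappa -> forall x, InC d x -> lt x (c e) -> lt x (beta a e)).
  { intros a HAa e He x Hx Hxc. apply (not_le_lt Hwo). intros Hle.
    assert (Hb : lte (beta a e) top) by (left; apply Htop; auto; apply HX; exact (proj1 HAa)).
    assert (H1 := proj2 (proj2 (minC_spec Hb)) x Hx Hle). rewrite <- (proj1 (KA a HAa e He)) in H1.
    exact (le_not_lt Hwo H1 Hxc). }
  exists c, (wset bits). split; [|split].
  - eapply pos_sup; [exact HA|]. intros a _ h; apply HAL; auto.
  - intros v Hv. apply NNPP; intros Hn.
    assert (Hw : Wex c bits).
    { exists v; split; auto. unfold pos, pos_mod in Hn. apply NNPP in Hn. exact Hn. }
    destruct (W_spec Hw) as [HWv HWn].
    destruct (bound _ Hc) as [m [Hm Hcm]].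
    assert (HWin : forall e, lt e kappa -> InC d (W c bits e)) by (intros e He; exact (C_wit Hm Hcm Hnorm He)).
    apply HA. eapply null_sub; [exact HWn|]. intros a _ HAa. split; [apply HAL; auto|].
    intros e He Hwe. exact (Hmu a HAa e He _ (HWin e He) (HWv e He Hwe)).
  - intros e He Hwe g' Hg' f Hf.
    assert (HCF : lt (CF (c e)) sigma).
    { exact (le_lt_tr Hwo (proj2 (CF_spec (c e)) g' (ex_intro _ f Hf)) Hg'). }
    destruct (bound _ Hc) as [m [Hm Hcm]].
    destruct (pos_ex HA) as [a [_ HAa]].
    assert (Hb : lt (beta a e) (c e)) by exact (proj2 (proj2 (HAL a HAa)) e He Hwe).
    destruct (@fcof_cof (c e) (beta a e) Hb) as [i0 Hi0].
    assert (Hin : InC d (proj1_sig (fcof (c e) i0))) by exact (C_cof i0 Hm (Hcm e He) HCF).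
    assert (H2 := Hmu a HAa e He _ Hin (proj2_sig (fcof (c e) i0))).
    exact (le_not_lt Hwo Hi0 H2).
Qed.

End Atom.

Lemma infinite_case : exists c w, good Pk X c w.
Proof.
  destruct delta_exists as [d [H1 [H2 H3]]]. exact (infinite_case_d H1 H2 H3).
Qed.
End Main.



Theorem claim6p1 (T : Type) (lt : T -> T -> Prop) (Hwo : strict_wellorder lt)
  (theta kappa sigma : T) (D : (T -> Prop) -> Prop) (beta : T -> T -> T)
  (Hroom : exists top, forall a e, lt a theta -> lt e kappa -> lt (beta a e) top)
  (Htheta : is_cf lt theta theta)
  (Hkappa : is_cardinal lt kappa)
  (Hsigma_card : is_cardinal lt sigma)
  (Hsigma_reg : is_cf lt sigma sigma)
  (Hsigma_kappa_plus : exists l, lt l sigma /\ card_lt (segT lt kappa) (segT lt l))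
  (Hpow : forall a, lt a sigma ->
     card_lt (segT lt kappa -> segT lt a) (segT lt sigma))
  (HD : complete_filter lt theta sigma D)
  (Htail : forall a, lt a theta -> D (fun x => lt x theta /\ ~ lt x a)) :
  forall X : T -> Prop, (forall x, X x -> lt x theta) -> pos_mod lt theta D X ->
  exists (bstar : T -> T) (w : T -> Prop),
    (forall e, w e -> lt e kappa) /\
    (* (a) *)
    (forall e, lt e kappa -> ~ w e ->
       exists c, is_cf lt (bstar e) c /\ le lt sigma c /\ le lt c theta) /\
    let B := fun a => X a /\
       (forall e, lt e kappa -> w e -> beta a e = bstar e) /\
       (forall e, lt e kappa -> ~ w e ->
          (exists s, is_sup lt (fun y => exists z, lt z kappa /\ y = bstar z /\
                                         lt (bstar z) (bstar e)) s
                     /\ lt s (beta a e)) /\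
          lt (beta a e) (bstar e)) in
    (* (b) *)
    pos_mod lt theta D B /\
    (* (c) *)
    (forall bprime : T -> T,
       (forall e, lt e kappa -> ~ w e -> lt (bprime e) (bstar e)) ->
       pos_mod lt theta D (fun a => B a /\
          forall e, lt e kappa -> ~ w e -> lt (bprime e) (beta a e))).
Proof.
  intros X HX HXp. destruct Hroom as [top Htop]. destruct Hsigma_kappa_plus as [l [Hl Hlk]].
  destruct (kappa_fin_or_inf Hwo theta kappa) as [[K HK]|Hinf].
  - destruct (finite_case Hwo beta top Htop Hsigma_reg Hl Hlk HD HXp K (fun x h => proj1 (HK x) h)) as [Y [c [w [HYX Hg]]]].
    apply (@final_assembly T lt Hwo theta kappa sigma D beta l Hl Hlk HD X Y c w HYX). apply good_ext with (P := fun x => In x K); [exact HD|intros x; apply HK| exact Hg].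
  - destruct (infinite_case Hwo beta top Htop Hsigma_reg Hl Hlk Hpow HD HX HXp Hinf) as [c [w Hg]].
    exact (@final_assembly T lt Hwo theta kappa sigma D beta l Hl Hlk HD X X c w (fun a h => h) Hg).
Qed.
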